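(* Let $\mu>0$, $\tau>0$, and real numbers $\theta_0,u_0,\theta^\ast$ with $\theta_0\neq u_0$ satisfying $\mu\tau=\dfrac{\theta^\ast-\theta_0}{\theta_0-u_0}$. Consider the system $$\dot u=-\mu(u-\theta),\qquad \dot\theta=-\eta(t)\,(u-\theta^\ast),\qquad u(0)=u_0,\ \theta(0)=\theta_0,$$ on $[0,\tau]$ with the learning rate schedule $\eta(t)=\dfrac{1}{\tau-t+1/\mu}$. Then, with $m=\mu(\theta_0-u_0)$, the solution is $u(t)=u_0+mt$ and $\theta(t)=\frac{m}{\mu}+u_0+mt$ for $t\in[0,\tau]$; in particular $\ddot u\equiv 0$ (the sample centre of mass moves at constant speed) and $\theta(\tau)=\theta^\ast$.
   Context: This is the harmonic trap energy-based model: energy $E(x,\theta)=\frac12(x-\theta)^2$ on $\mathbb{R}$, model distribution Gaussian with mean $\theta$ and variance $\beta^{-1}$, data distribution Gaussian with mean $\theta^\ast$. Here $u(t)$ is the mean of the sample distribution evolving under overdamped Langevin dynamics with mobility $\mu$, and $\theta(t)$ is updated by the approximate maximum-likelihood gradient flow with time-dependent learning rate $\eta(t)$. The excess work of the process is $\int_0^\tau(\theta-u)\dot\theta\,dt=\frac12(\dot u/\mu)^2\big|_0^\tau+\frac1\mu\int_0^\tau\dot u^2\,dt$, whose integral part is minimized by $\ddot u=0$. *)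

(* Defs.v *)
From Stdlib Require Import Reals.
From Coquelicot Require Import Coquelicot.
Open Scope R_scope.

Definition eta_sched (mu tau t : R) : R := / (tau - t + / mu).

Definition solves_system (mu tau u0 theta0 theta_star : R) (u theta : R -> R) : Prop :=
  u 0 = u0 /\ theta 0 = theta0 /\
  forall t, 0 <= t <= tau ->
    is_derive u t (- mu * (u t - theta t)) /\
    is_derive theta t (- eta_sched mu tau t * (u t - theta_star)).

(* Main.v *)
Require Import Defs.
From Stdlib Require Import Reals Lra Psatz.
From Coquelicot Require Import Coquelicot.
From Stdlib Require Import ssreflect.
Open Scope R_scope.

Lemma cont_of_der (f : R -> R) x l : is_derive f x l -> continuity_pt f x.
Proof.
  intro H. apply continuity_pt_filterlim. apply: ex_derive_continuous. exists l; exact H.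
Qed.

Lemma dF (C : R) (a b : R -> R) t da db :
  is_derive a t da -> is_derive b t db ->
  is_derive (fun x => (a x * a x + b x * b x) * exp (- C * x)) t
    ((2 * a t * da + 2 * b t * db) * exp (- C * t)
     + (a t * a t + b t * b t) * (- C * exp (- C * t))).
Proof.
  intros Ha Hb.
  have Hs : is_derive (fun x => a x * a x + b x * b x) t (2 * a t * da + 2 * b t * db).
  { have H1 := is_derive_mult _ _ _ _ _ Ha Ha Rmult_comm.
    have H2 := is_derive_mult _ _ _ _ _ Hb Hb Rmult_comm.
    have H3 := is_derive_plus _ _ _ _ _ H1 H2.
    simpl in H3. unfold plus, mult in H3; simpl in H3.
    replace (2 * a t * da + 2 * b t * db) with
      (da * a t + a t * da + (db * b t + b t * db)) by ring. exact H3. }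
  have He : is_derive (fun x => exp (- C * x)) t (- C * exp (- C * t)).
  { auto_derive; [exact I | ring]. }
  have H := is_derive_mult _ _ _ _ _ Hs He Rmult_comm.
  simpl in H. unfold plus, mult in H; simpl in H. exact H.
Qed.

Lemma quad_neg (mu k x y : R) : 0 < mu -> 0 <= k -> k <= mu ->
  - 4 * mu * x * x + 2 * k * x * y - 2 * mu * y * y <= 0.
Proof.
  intros H1 H2 H3.
  assert (A := Rmult_le_pos _ _ H2 (Rle_0_sqr (x - y))). unfold Rsqr in A.
  assert (H4 : 0 <= mu - k) by lra.
  assert (H5 : 0 <= x * x + y * y) by (assert (G1 := Rle_0_sqr x); assert (G2 := Rle_0_sqr y); unfold Rsqr in *; lra).
  assert (B := Rmult_le_pos _ _ H4 H5).
  nra.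
Qed.

Theorem mainTheorem2 (mu tau theta0 u0 theta_star : R) :
  0 < mu -> 0 < tau -> theta0 <> u0 ->
  mu * tau = (theta_star - theta0) / (theta0 - u0) ->
  let m := mu * (theta0 - u0) in
  (* the explicit pair is a solution *)
  solves_system mu tau u0 theta0 theta_star
    (fun t => u0 + m * t) (fun t => m / mu + u0 + m * t) /\
  (* and every solution coincides with it on [0, tau], moves at constant
     speed, has zero acceleration, and reaches theta* at time tau *)
  (forall u theta : R -> R,
     solves_system mu tau u0 theta0 theta_star u theta ->
     (forall t, 0 <= t <= tau ->
        u t = u0 + m * t /\ theta t = m / mu + u0 + m * t /\ Derive u t = m) /\
     (forall t, 0 < t < tau -> Derive_n u 2 t = 0) /\
     theta tau = theta_star).
Proof.
  intros Hmu Htau Hne Hrel m.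
  have Hd : theta0 - u0 <> 0 by lra.
  have Hts : theta_star = theta0 + m * tau.
  { unfold m. apply (Rmult_eq_reg_r (/ (theta0 - u0))); [|apply Rinv_neq_0_compat; lra].
    rewrite Rmult_assoc (Rmult_comm (theta0 - u0)) -Rmult_assoc.
    rewrite Hrel. field. exact Hd. }
  have Hmm : m / mu = theta0 - u0 by unfold m; field; lra.
  have Heta : forall t, 0 <= t <= tau -> 0 < tau - t + / mu /\ eta_sched mu tau t <= mu
     /\ 0 < eta_sched mu tau t.
  { intros t Ht. have Hi : 0 < / mu by apply Rinv_0_lt_compat.
    have Hp : 0 < tau - t + / mu by lra.
    split; [exact Hp|]. unfold eta_sched. split.
    - rewrite -{2}(Rinv_inv mu). apply Rinv_le_contravar; lra.
    - apply Rinv_0_lt_compat; lra. }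
  have Hexp : solves_system mu tau u0 theta0 theta_star
    (fun t => u0 + m * t) (fun t => m / mu + u0 + m * t).
  { split; [ring|]. split; [rewrite Hmm; ring|].
    intros t Ht. destruct (Heta t Ht) as [Hp _]. split.
    - auto_derive; [exact I|]. field. lra.
    - auto_derive; [exact I|]. unfold eta_sched. rewrite Hts.
      unfold m. field; split; [lra|nra]. }
  split; [exact Hexp|].
  intros u theta [Hu0 [Hth0 Hder]].
  set a := fun t => u t - (u0 + m * t).
  set b := fun t => theta t - (m / mu + u0 + m * t).
  set C := 2 * mu.
  set F := fun x => (a x * a x + b x * b x) * exp (- C * x).
  have Hda : forall t, 0 <= t <= tau -> is_derive a t (- mu * (a t - b t)).
  { intros t Ht. destruct (Hder t Ht) as [H1 _].
    have H2 : is_derive (fun t => u0 + m * t) t m by auto_derive; [exact I|ring].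
    have H := is_derive_minus _ _ _ _ _ H1 H2. simpl in H. unfold minus, plus, opp in H; simpl in H.
    unfold a, b. replace (- mu * (u t - (u0 + m * t) - (theta t - (m / mu + u0 + m * t))))
      with (- mu * (u t - theta t) + - m) by (field; lra). exact H. }
  have Hdb : forall t, 0 <= t <= tau -> is_derive b t (- eta_sched mu tau t * a t).
  { intros t Ht. destruct (Hder t Ht) as [_ H1].
    destruct (Heta t Ht) as [Hp _].
    have H2 : is_derive (fun t => m / mu + u0 + m * t) t m by auto_derive; [exact I|ring].
    have H := is_derive_minus _ _ _ _ _ H1 H2. simpl in H. unfold minus, plus, opp in H; simpl in H.
    unfold a, b. replace (- eta_sched mu tau t * (u t - (u0 + m * t)))
      with (- eta_sched mu tau t * (u t - theta_star) + - m). exact H.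
    unfold eta_sched. rewrite Hts. unfold m. field. split; [lra|nra]. }
  set dF' := fun t => (2 * a t * (- mu * (a t - b t)) + 2 * b t * (- eta_sched mu tau t * a t))
       * exp (- C * t) + (a t * a t + b t * b t) * (- C * exp (- C * t)).
  have HdF : forall t, 0 <= t <= tau -> is_derive F t (dF' t).
  { intros t Ht. apply dF; [apply Hda | apply Hdb]; exact Ht. }
  have HdFneg : forall t, 0 <= t <= tau -> dF' t <= 0.
  { intros t Ht. destruct (Heta t Ht) as [_ [Hle Hpos]].
    unfold dF'. have He := exp_pos (- C * t).
    set e := exp (- C * t). set k := eta_sched mu tau t.
    set x := a t. set y := b t. fold e in He. fold k in Hle, Hpos.
    replace ((2 * x * (- mu * (x - y)) + 2 * y * (- k * x)) * e + (x * x + y * y) * (- C * e))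
      with (e * (- 4 * mu * x * x + 2 * (mu - k) * x * y - 2 * mu * y * y)) by (unfold C; ring).
    apply Rmult_le_0_l; [lra|].
    have Hk0 : 0 <= mu - k by lra.
    apply (quad_neg mu (mu - k) x y); lra. }
  have Hzero : forall t, 0 <= t <= tau -> a t = 0 /\ b t = 0.
  { intros t Ht.
    destruct (Rle_lt_or_eq_dec 0 t (proj1 Ht)) as [Hlt | Heq].
    2:{ subst t. unfold a, b. rewrite Hu0 Hth0 Hmm. split; ring. }
    destruct (MVT_gen F 0 t dF') as [c [Hc Hmvt]].
    - intros x Hx. rewrite Rmin_left in Hx; [|lra]. rewrite Rmax_right in Hx; [|lra].
      apply HdF. lra.
    - intros x Hx. rewrite Rmin_left in Hx; [|lra]. rewrite Rmax_right in Hx; [|lra].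
      apply (cont_of_der _ _ _ (HdF x ltac:(lra))).
    - rewrite Rmin_left in Hc; [|lra]. rewrite Rmax_right in Hc; [|lra].
      have H1 := HdFneg c ltac:(lra).
      have HF0 : F 0 = 0.
      { unfold F, a, b. rewrite Hu0 Hth0 Hmm. ring. }
      have HFt : F t <= 0.
      { rewrite HF0 in Hmvt. nra. }
      unfold F in HFt. have He := exp_pos (- C * t).
      have Hs : a t * a t + b t * b t <= 0.
      { apply (Rmult_le_reg_r (exp (- C * t))); [exact He|]. lra. }
      split; nra. }
  have Hsol : forall t, 0 <= t <= tau ->
        u t = u0 + m * t /\ theta t = m / mu + u0 + m * t /\ Derive u t = m.
  { intros t Ht. destruct (Hzero t Ht) as [Ha Hb]. unfold a, b in Ha, Hb.
    split; [lra|]. split; [lra|].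
    destruct (Hder t Ht) as [H1 _]. rewrite (is_derive_unique _ _ _ H1).
    replace (u t - theta t) with (- (m / mu)) by lra. field. lra. }
  split; [exact Hsol|]. split.
  - intros t Ht. simpl.
    apply is_derive_unique.
    apply (is_derive_ext_loc (fun _ => m)).
    + have Hpos : 0 < Rmin t (tau - t) by apply Rmin_glb_lt; lra.
      exists (mkposreal _ Hpos). intros y Hy.
      unfold ball in Hy; simpl in Hy. unfold AbsRing_ball, abs, minus, plus, opp in Hy; simpl in Hy.
      have Hm1 := Rmin_l t (tau - t). have Hm2 := Rmin_r t (tau - t).
      apply Rabs_def2 in Hy. symmetry. apply (Hsol y). lra.
    + auto_derive; [exact I|ring].
  - destruct (Hsol tau ltac:(lra)) as [_ [H _]]. rewrite H Hts Hmm. ring.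
Qed.
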